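(* Let $H=K_{i_1,1,\dots,1}$ be the complete multipartite graph with $m$ parts, one part of size $i_1\le 2$ and all other parts of size $1$. Then $b_H(n)=\Theta(n^{m-1})$ as $n\to\infty$.
   Context: For a graph $G$, $\mathrm{cl}(G)$ denotes its clique complex. For a finite simple graph $H$ and a fixed field $\mathbb{K}$, $b_H(n)=\max_G \sum_{i\ge -1}\dim_{\mathbb{K}}\widetilde H_i(\mathrm{cl}(G);\mathbb{K})$, where $G$ ranges over all simple graphs on at most $n$ vertices containing no induced copy of $H$ (reduced homology, the empty graph contributing $1$). *)

(* Defs.v *)
From mathcomp Require Import all_boot all_order all_algebra.
Set Implicit Arguments. Unset Strict Implicit. Unset Printing Implicit Defensive.
Import GRing.Theory.
Local Open Scope ring_scope.

Definition graph (k : nat) := {ffun 'I_k * 'I_k -> bool}.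

Definition simple_graph k (g : graph k) : bool :=
  [forall x, ~~ g (x, x)] && [forall x, [forall y, g (x, y) == g (y, x)]].

Definition is_clique k (g : graph k) (A : {set 'I_k}) : bool :=
  [forall x in A, [forall y in A, (x != y) ==> g (x, y)]].

(* faces with s vertices (dimension s-1); s = 0 gives the empty face *)
Definition faces k (g : graph k) (s : nat) : {set {set 'I_k}} :=
  [set A : {set 'I_k} | is_clique g A & #|A| == s].

(* sign exponent: position of the removed vertex in the ordered face *)
Definition bd_sign k (A B : {set 'I_k}) : nat :=
  (\sum_(x in A :\: B) #|[set y in B | (y < x)%N]|)%N.

Definition bd_entry (K : fieldType) k (g : graph k) (s : nat)
    (A B : {set 'I_k}) : K :=
  if [&& A \in faces g s, B \in faces g s.-1 & B \subset A]
  then (-1) ^+ bd_sign A B else 0.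

(* boundary map from s-vertex faces to (s-1)-vertex faces (zero for s = 0),
   written as a matrix indexed by all subsets (non-face rows/columns are 0) *)
Definition bdmx (K : fieldType) k (g : graph k) (s : nat)
    : 'M[K]_(#|{: {set 'I_k}}|) :=
  \matrix_(i, j) (if s is 0 then 0
                  else bd_entry K g s (enum_val i) (enum_val j)).

(* reduced Betti number in dimension s-1: dim ker d_s - rank d_(s+1) *)
Definition reduced_betti (K : fieldType) k (g : graph k) (s : nat) : nat :=
  ((#|faces g s| - \rank (bdmx K g s)) - \rank (bdmx K g s.+1))%N.

(* sum over all dimensions i >= -1 (faces have at most k vertices) *)
Definition total_betti (K : fieldType) k (g : graph k) : nat :=
  (\sum_(s < k.+2) reduced_betti K g s)%N.

Definition has_induced h (H : graph h) k (G : graph k) : bool :=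
  [exists f : {ffun 'I_h -> 'I_k},
     injectiveb f && [forall x, [forall y, G (f x, f y) == H (x, y)]]].

Definition bH (K : fieldType) h (H : graph h) (n : nat) : nat :=
  (\max_(k < n.+1)
     \max_(G : graph k | simple_graph G && ~~ has_induced H G)
        total_betti K G)%N.

(* complete multipartite graph K_{i1,1,...,1} with m parts (m >= 1):
   vertices 0..i1-1 form part 0, each further vertex is its own part *)
Definition mpart (i1 m : nat) (v : 'I_(i1 + m.-1)) : nat :=
  if (v < i1)%N then 0%N else (v - i1).+1.

Definition Kmulti (i1 m : nat) : graph (i1 + m.-1) :=
  [ffun p => @mpart i1 m p.1 != @mpart i1 m p.2].

(* Main.v *)
Require Import Defs.
From mathcomp Require Import all_boot all_order all_algebra.
From mathcomp Require Import zify.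
Set Implicit Arguments. Unset Strict Implicit. Unset Printing Implicit Defensive.
Import GRing.Theory.
Local Open Scope ring_scope.

Lemma rank_colsub (F : fieldType) m n n' (g : 'I_n' -> 'I_n) (M : 'M[F]_(m, n)) :
  (\rank (colsub g M) <= \rank M)%N.
Proof.
have -> : colsub g M = (rowsub g M^T)^T by apply/matrixP => i j; rewrite !mxE.
by rewrite mxrank_tr -[leqRHS]mxrank_tr; apply: mxrankS; apply: rowsub_sub.
Qed.

Lemma rank_lower (F : fieldType) (T : finType) (M : 'M[F]_#|T|) (A : {set T})
  (r c : T -> T) :
  (forall x, x \in A -> M (enum_rank (r x)) (enum_rank (c x)) != 0) ->
  (forall x y, x \in A -> y \in A -> x != y ->
      M (enum_rank (r x)) (enum_rank (c y)) = 0) ->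
  (#|A| <= \rank M)%N.
Proof.
move=> Hd Ho.
pose e (i : 'I_#|A|) : T := enum_val i.
have eA i : e i \in A by apply: enum_valP.
pose D := mxsub (fun i => enum_rank (r (e i))) (fun i => enum_rank (c (e i))) M.
have DE : D = diag_mx (\row_i D i i).
  apply/matrixP => i j; rewrite !mxE; case: eqVneq => [->|ij]; first by rewrite mulr1n.
  rewrite mulr0n; apply: Ho => //.
  by apply: contra ij => /eqP /enum_val_inj ->.
have Du : D \in unitmx.
  rewrite unitmxE DE det_diag unitfE; apply/prodf_neq0 => i _.
  by rewrite !mxE; apply: Hd.
rewrite -(mxrank_unit Du) /D mxsubrc.
apply: leq_trans (rank_colsub _ _); apply: mxrankS; exact: rowsub_sub.
Qed.

Lemma rank_upper (F : fieldType) (T : finType) (M : 'M[F]_#|T|) (B : {set T}) :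
  (forall i j, enum_val j \notin B -> M i j = 0) ->
  (\rank M <= #|B|)%N.
Proof.
move=> H0.
pose f (i : 'I_#|B|) : 'I_#|T| := enum_rank (enum_val i : T).
rewrite -mxrank_tr.
apply: leq_trans (rank_leq_row (rowsub f M^T)).
apply: mxrankS; apply/row_subP => j.
case: (boolP (enum_val j \in B)) => jB.
  have -> : j = f (enum_rank_in jB (enum_val j)).
    by rewrite /f enum_rankK_in // enum_valK.
  have -> : row (f (enum_rank_in jB (enum_val j))) M^T = row (enum_rank_in jB (enum_val j)) (rowsub f M^T)
    by apply/matrixP => a b; rewrite !mxE.
  exact: row_sub.
have -> : row j M^T = 0 by apply/matrixP => a b; rewrite !mxE H0.
exact: sub0mx.
Qed.
Section G.
Variables (k : nat) (g : graph k).

Lemma cliqueP (A : {set 'I_k}) :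
  reflect (forall x y, x \in A -> y \in A -> x != y -> g (x, y)) (is_clique g A).
Proof.
apply: (iffP forallP) => [H x y xA yA xy | H x].
  by move: (H x); rewrite xA /= => /forallP /(_ y); rewrite yA xy.
apply/implyP => xA; apply/forallP => y; apply/implyP => yA; apply/implyP => xy.
exact: H.
Qed.

Lemma clique_sub (A B : {set 'I_k}) : A \subset B -> is_clique g B -> is_clique g A.
Proof.
move=> /subsetP AB /cliqueP H; apply/cliqueP => x y xA yA; apply: H; exact: AB.
Qed.

Lemma facesE s A : (A \in faces g s) = is_clique g A && (#|A| == s).
Proof. by rewrite inE. Qed.

Definition Xs (t : {set 'I_k}) := [set x | is_clique g (x |: t)].

Lemma sub_Xs t : is_clique g t -> t \subset Xs t.
Proof. by move=> ct; apply/subsetP => x xt; rewrite inE; have /setUidPr -> : [set x] \subset t by rewrite sub1set. Qed.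

Lemma Xs_sub m (t s : {set 'I_k}) :
  (forall t, is_clique g t -> (m.-1 <= #|t|)%N -> is_clique g (Xs t)) ->
  t \subset s -> is_clique g s -> (m.-1 <= #|t|)%N -> Xs t = Xs s.
Proof.
move=> hX ts cs ht; apply/setP => x; apply/idP/idP; rewrite !inE => H.
  have cX : is_clique g (Xs t) by apply: hX => //; exact: clique_sub cs.
  apply: clique_sub cX; rewrite subUset sub1set.
  have -> : x \in Xs t by rewrite inE.
  apply/subsetP => y ys; rewrite inE; apply: clique_sub cs.
  by rewrite subUset sub1set ys.
apply: clique_sub H; exact: setUS.
Qed.

Lemma bdmxE (K : fieldType) s (A B : {set 'I_k}) :
  bdmx K g s.+1 (enum_rank A) (enum_rank B) = bd_entry K g s.+1 A B.
Proof. by rewrite /bdmx mxE !enum_rankK. Qed.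

Lemma betti0 (K : fieldType) m s :
  (forall t, is_clique g t -> (m.-1 <= #|t|)%N -> is_clique g (Xs t)) ->
  (m <= s.+1)%N -> reduced_betti K g s.+1 = 0%N.
Proof.
move=> hX ms.
set F := faces g s.+1.
rewrite /reduced_betti -/F.
case: (set_0Vmem F) => [F0 | [s0 s0F]]; first by rewrite F0 cards0.
have [v0 v0s0] : {v | v \in s0}.
  case: (set_0Vmem s0) => [e|//]; move: s0F; rewrite facesE e cards0 andbC //.
pose c (t : {set 'I_k}) := odflt v0 [pick x in Xs t].
have cP t : is_clique g t -> t != set0 -> c t \in Xs t.
  move=> ct /set0Pn [y yt]; rewrite /c; case: pickP => [x //|/(_ y)].
  by move/subsetP: (sub_Xs ct) => /(_ y yt) ->.
have ceq t u : Xs t = Xs u -> c t = c u by rewrite /c => ->.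
have Fne t : t \in F -> t != set0.
  by rewrite facesE => /andP [_ /eqP ts]; apply/eqP => t0; move: ts; rewrite t0 cards0.
pose P := [set t | c t \in t].
have hm : (m.-1 <= s)%N by move: ms; case: (m).
have r1 : (#|F :&: P| <= \rank (bdmx K g s.+1))%N.
  apply: (rank_lower (r := id) (c := fun t => t :\ c t)) => [x|x y].
    move=> /setIP [xF]; rewrite inE => cx; rewrite bdmxE /bd_entry xF /= facesE subD1set andbT.
    move: xF; rewrite facesE => /andP [cl /eqP xs].
    rewrite (clique_sub (subD1set _ _) cl) /=.
    by move: xs; rewrite (cardsD1 (c x)) cx add1n => -[->]; rewrite eqxx signr_eq0.
  move=> /setIP [xF]; rewrite inE => cx /setIP [yF]; rewrite inE => cy xy.
  rewrite bdmxE /bd_entry; case: ifP => // /and3P [_ Hf Hsub]; exfalso.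
  move: (xF) (yF) Hf; rewrite !facesE => /andP [clx /eqP xs] /andP [cly /eqP ys] /andP [_ /eqP ts].
  have e1 := Xs_sub hX Hsub clx; rewrite ts in e1; have {}e1 := e1 hm.
  have e2 := Xs_sub hX (subD1set y (c y)) cly; rewrite ts in e2; have {}e2 := e2 hm.
  have cxy : c x = c y by apply: ceq; rewrite -e1 e2.
  move/negP: xy; apply; apply/eqP.
  rewrite -(setD1K cy) -cxy; apply/eqP; rewrite eq_sym eqEcard.
  rewrite subUset sub1set cx cxy Hsub /= cardsU1 ts xs setD11 //.
have r2 : (#|F :\: P| <= \rank (bdmx K g s.+2))%N.
  apply: (rank_lower (r := fun t => c t |: t) (c := id)) => [x|x y].
    move=> /setDP [xF]; rewrite inE => cx; rewrite bdmxE /bd_entry /= facesE subsetUr andbT.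
    have cxX := cP x (clique_sub (subxx _) _) (Fne _ xF).
    move: (xF); rewrite facesE => /andP [cl /eqP xs].
    move: (cxX cl); rewrite inE => ->.
    by rewrite cl cardsU1 cx xs !eqxx signr_eq0.
  move=> /setDP [xF]; rewrite inE => cx /setDP [yF]; rewrite inE => cy xy.
  rewrite bdmxE /bd_entry; case: ifP => // /and3P [Hf _ Hsub]; exfalso.
  move: (xF) (yF) Hf; rewrite !facesE => /andP [clx /eqP xs] /andP [cly /eqP ys] /andP [clr _].
  have hx : (m.-1 <= #|x|)%N by rewrite xs; apply: leq_trans hm _.
  have hy : (m.-1 <= #|y|)%N by rewrite ys; apply: leq_trans hm _.
  have e1 := Xs_sub hX (subsetUr [set c x] x) clr hx.
  have e2 := Xs_sub hX Hsub clr hy.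
  have cxy : c y = c x by apply: ceq; rewrite e2 e1.
  move/negP: xy; apply; apply/eqP; apply/eqP; rewrite eq_sym eqEcard xs ys leqnn andbT.
  apply/subsetP => z zy; move/subsetP: Hsub => /(_ z zy) /setU1P [ez|//].
  by move: cy; rewrite cxy -ez zy.
apply/eqP; rewrite subn_eq0 leq_subLR -(cardsID P F); exact: leq_add r1 r2.
Qed.
End G.

Local Close Scope ring_scope.

Lemma induced_of_seq h (H : graph h) k (G : graph k) (x0 : 'I_k) (L : seq 'I_k) :
  uniq L -> (h <= size L)%N ->
  (forall a b : 'I_h, G (nth x0 L a, nth x0 L b) = H (a, b)) -> has_induced H G.
Proof.
move=> uL hL HG; apply/existsP; exists [ffun a : 'I_h => nth x0 L a]; apply/andP; split.
  apply/injectiveP => a b; rewrite !ffunE => /eqP; rewrite nth_uniq //.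
  - by move/eqP/val_inj.
  - exact: leq_trans (ltn_ord a) hL.
  - exact: leq_trans (ltn_ord b) hL.
by apply/forallP => a; apply/forallP => b; rewrite !ffunE HG.
Qed.

Lemma simpleP k (g : graph k) : simple_graph g ->
  (forall x, g (x, x) = false) /\ (forall x y, g (x, y) = g (y, x)).
Proof.
move=> /andP [/forallP H1 /forallP H2]; split => [x|x y]; first exact: negbTE (H1 x).
by move: (H2 x) => /forallP /(_ y) /eqP.
Qed.

Lemma hX_of i1 m k (g : graph k) : simple_graph g -> (1 <= i1 <= 2)%N ->
  ~~ has_induced (Kmulti i1 m) g ->
  forall t, is_clique g t -> (m.-1 <= #|t|)%N -> is_clique g (Xs g t).
Proof.
move=> /simpleP [gl gs] hi Hf t ct ht; apply/cliqueP => x y.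
rewrite !inE => cx cy xy; apply/negPn/negP => nxy.
have xt : x \notin t.
  apply/negP => xt; move/cliqueP: cy => /(_ y x (setU11 _ _) (setU1r _ xt)).
  by rewrite eq_sym xy gs (negbTE nxy) => /(_ isT).
have yt : y \notin t.
  apply/negP => yt; move/cliqueP: cx => /(_ x y (setU11 _ _) (setU1r _ yt)).
  by rewrite xy (negbTE nxy) => /(_ isT).
move/negP: Hf; apply.
case/andP: hi; case: i1 => [//|[|[|//]]] _ _.
-
  apply: (induced_of_seq (x0 := x) (L := enum (x |: t))).
  + exact: enum_uniq.
  + by rewrite -cardE cardsU1 xt leq_add2l.
  move=> a b; rewrite /Kmulti ffunE /mpart /=.
  have hs : (1 + m.-1 <= size (enum (x |: t)))%N by rewrite -cardE cardsU1 xt leq_add2l.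
  have Ha := leq_trans (ltn_ord a) hs.
  have Hb := leq_trans (ltn_ord b) hs.
  case: (eqVneq a b) => [->|ab]; first by rewrite gl eqxx.
  have -> : ((if (a < 1)%N then 0 else (a - 1).+1) != (if (b < 1)%N then 0 else (b - 1).+1))%N.
    apply: contra ab => /eqP e; apply/eqP/val_inj => /=; move: e.
    case: (a : nat) => [|a']; case: (b : nat) => [|b'] //=; rewrite ?subn1 //=.
  move/cliqueP: cx => cx; apply: cx.
  - by rewrite -mem_enum; apply: mem_nth.
  - by rewrite -mem_enum; apply: mem_nth.
  by rewrite nth_uniq ?enum_uniq //.
-
  have ut := enum_uniq (mem t).
  apply: (induced_of_seq (x0 := x) (L := x :: y :: enum t)).
  + rewrite /= !inE negb_or xy !mem_enum xt yt ut.
    by [].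
  + by rewrite /= -cardE add2n.
  have mt j : (j < #|t|)%N -> nth x (enum t) j \in t.
    by move=> jt; rewrite -mem_enum; apply: mem_nth; rewrite -cardE.
  have nx j : (j < #|t|)%N -> x != nth x (enum t) j.
    by move=> /mt jt; apply: contraNneq xt => ->.
  have ny j : (j < #|t|)%N -> y != nth x (enum t) j.
    by move=> /mt jt; apply: contraNneq yt => ->.
  move/cliqueP: cx => cx; move/cliqueP: cy => cy; move/cliqueP: (ct) => ctt.
  have gx j : (j < #|t|)%N -> g (x, nth x (enum t) j).
    by move=> jt; apply: cx; [exact: setU11 | apply: setU1r; exact: mt | exact: nx].
  have gy j : (j < #|t|)%N -> g (y, nth x (enum t) j).
    by move=> jt; apply: cy; [exact: setU11 | apply: setU1r; exact: mt | exact: ny].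
  have nxy' : g (x, y) = false by apply: negbTE.
  have nyx : g (y, x) = false by rewrite gs.
  case=> [[|[|a]] Ha]; case=> [[|[|b]] Hb];
    rewrite /Kmulti ffunE /mpart /= ?gl ?nxy' ?nyx //.
  all: try (have at' : (a < #|t|)%N by apply: leq_trans ht; rewrite add2n in Ha).
  all: try (have bt : (b < #|t|)%N by apply: leq_trans ht; rewrite add2n in Hb).
  - by rewrite gx.
  - by rewrite gy.
  - by rewrite gs gx.
  - by rewrite gs gy.
  - rewrite !subn2 /=.
    case: (eqVneq a b) => [->|ab]; first by rewrite gl eqxx.
    rewrite eqSS ab; apply: ctt; try exact: mt.
    by rewrite nth_uniq // -cardE.
Qed.


Lemma expn_mono a b e : (a <= b)%N -> (a ^ e <= b ^ e)%N.
Proof. by move=> ab; elim: e => [|e IH] //; rewrite !expnS leq_mul. Qed.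

Lemma ffact_le n s : (n ^_ s <= n ^ s)%N.
Proof.
elim: s n => [|s IH] n; first by [].
rewrite ffactnS expnS leq_mul2l; case: n => [|n] //=.
apply: leq_trans (IH n) _; exact: expn_mono.
Qed.

Lemma bin_le n s : ('C(n, s) <= n ^ s)%N.
Proof.
apply: leq_trans (ffact_le n s); rewrite -bin_ffact; apply: leq_pmulr; exact: fact_gt0.
Qed.

Lemma faces_le k (g : graph k) s : (#|faces g s| <= 'C(k, s))%N.
Proof.
rewrite -[X in 'C(X, _)]card_ord -card_draws; apply: subset_leq_card.
by apply/subsetP => A; rewrite !inE => /andP [].
Qed.

Lemma sum_le m X K (F : nat -> nat) :
  (forall s, (m <= s)%N -> F s = 0%N) -> (forall s, (F s <= X)%N) ->
  (\sum_(s < K) F s <= m * X)%N.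
Proof.
move=> F0 FX.
suff : (\sum_(s < K) F s <= minn K m * X)%N.
  by move/leq_trans; apply; rewrite leq_mul2r geq_minr orbT.
elim: K => [|K IH]; first by rewrite big_ord0.
rewrite big_ord_recr /=.
case: (ltnP K m) => Km.
  rewrite (minn_idPl Km).
  apply: leq_trans (leq_add IH (FX K)) _.
  by rewrite (minn_idPl (ltnW Km)) mulSn addnC.
rewrite F0 // addn0; apply: leq_trans IH _; rewrite leq_mul2r; apply/orP; right; lia.
Qed.

Lemma tb_upper (K : fieldType) i1 m k (g : graph k) n :
  simple_graph g -> (1 <= i1 <= 2)%N -> ~~ has_induced (Kmulti i1 m) g ->
  (1 <= m)%N -> (k <= n)%N -> (1 <= n)%N ->
  (total_betti K g <= m * n ^ (m - 1))%N.
Proof.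
move=> sg hi Hf m1 kn n1.
have hX := hX_of sg hi Hf.
rewrite /total_betti; apply: sum_le => s.
  case: s => [|s] ms; first by move: ms m1; case: (m).
  exact: betti0 hX ms.
case: (ltnP s m) => sm.
  rewrite /reduced_betti; apply: leq_trans (leq_subr _ _) _.
  apply: leq_trans (leq_subr _ _) _.
  apply: leq_trans (faces_le g s) _; apply: leq_trans (bin_le k s) _.
  apply: leq_trans (expn_mono s kn) _; apply: leq_pexp2l => //; lia.
case: s sm => [|s] sm; first by move: sm m1; case: (m).
by rewrite (betti0 K hX sm).
Qed.

Lemma induced_clique i1 m k (G : graph k) : (1 <= i1 <= 2)%N -> (1 <= m)%N ->
  has_induced (Kmulti i1 m) G -> exists A, is_clique G A && (#|A| == m).
Proof.
move=> hi m1 /existsP [f /andP [/injectiveP fi /forallP fH]].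
have GH a b : G (f a, f b) = Kmulti i1 m (a, b) by move: (fH a) => /forallP /(_ b) /eqP.
case/andP: hi; case: i1 f fi fH GH => [//|[|[|//]]] f fi _ GH _ _.
- exists (f @: setT); apply/andP; split; last first.
    by rewrite card_imset // cardsT card_ord add1n prednK.
  apply/cliqueP => _ _ /imsetP [a _ ->] /imsetP [b _ ->] ab.
  rewrite GH /Kmulti ffunE /mpart /=.
  have {}ab : a != b by apply: contra ab => /eqP ->.
  apply: contra ab => /eqP e; apply/eqP/val_inj => /=; move: e.
  by case: (a : nat) => [|a']; case: (b : nat) => [|b'] //=; rewrite ?subn1.
- pose a0 : 'I_(2 + m.-1) := @Ordinal (2 + m.-1) 0 isT.
  exists (f @: [set~ a0]); apply/andP; split; last first.
    by rewrite card_imset // cardsC1 card_ord add2n /= prednK.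
  apply/cliqueP => _ _ /imsetP [a] + -> /imsetP [b] + -> ab.
  rewrite !inE => a0' b0'.
  rewrite GH /Kmulti ffunE /mpart /=.
  have {}ab : a != b by apply: contra ab => /eqP ->.
  have a1 : (0 < a)%N by case: a a0' {ab} => [[|a] Ha] //.
  have b1 : (0 < b)%N by case: b b0' {ab} => [[|b] Hb] //.
  apply: contra ab => /eqP e; apply/eqP/val_inj => /=; move: e a1 b1.
  by case: (a : nat) => [|[|a']]; case: (b : nat) => [|[|b']] //=; rewrite ?subn2 // => -[->].
Qed.

Section Gt.
Variables (p t : nat).
Hypothesis p0 : (0 < p)%N.

Definition Gt : graph (p * t) := [ffun e : 'I_(p * t) * 'I_(p * t) => (e.1 %% p != e.2 %% p)%N].

Lemma Gt_simple : simple_graph Gt.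
Proof.
apply/andP; split; apply/forallP => x.
  by rewrite ffunE /= eqxx.
apply/forallP => y; rewrite !ffunE /=. by rewrite (eq_sym (y %% p)%N).
Qed.

Lemma Gt_clique_le (A : {set 'I_(p * t)}) : is_clique Gt A -> (#|A| <= p)%N.
Proof.
move=> /cliqueP cA.
pose phi (v : 'I_(p * t)) : 'I_p := Ordinal (ltn_pmod v p0).
rewrite -[leqRHS]card_ord; apply: (@leq_card_in _ _ phi) => a b aA bA /(congr1 val) /= e.
apply/eqP; apply/negPn/negP => ab; move: (cA a b aA bA ab); rewrite ffunE /= e.
by rewrite eqxx.
Qed.

Lemma Gt_free i1 m : (1 <= i1 <= 2)%N -> m = p.+1 ->
  ~~ has_induced (Kmulti i1 m) Gt.
Proof.
move=> hi ->; apply/negP => /(induced_clique hi (isT : (1 <= p.+1)%N)) [A /andP [cA /eqP cardA]].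
by move: (Gt_clique_le cA); rewrite cardA ltnn.
Qed.

Lemma vtx_lt (i : 'I_p) (j : 'I_t) : (i + p * j < p * t)%N.
Proof.
apply: (@leq_trans (p * j.+1)); first by rewrite mulnS ltn_add2r.
by rewrite leq_mul2l ltn_ord orbT.
Qed.

Definition vtx (i : 'I_p) (j : 'I_t) : 'I_(p * t) := Ordinal (vtx_lt i j).

Lemma vtx_mod i j : (vtx i j %% p)%N = i.
Proof. by rewrite /= addnC mulnC modnMDl modn_small. Qed.

Lemma vtx_div i j : (vtx i j %/ p)%N = j.
Proof. by rewrite /= addnC mulnC divnMDl // divn_small // addn0. Qed.

Definition phiF (h : {ffun 'I_p -> 'I_t}) : {set 'I_(p * t)} :=
  [set vtx i (h i) | i : 'I_p].

Lemma phiF_face h : phiF h \in faces Gt p.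
Proof.
rewrite facesE; apply/andP; split.
  apply/cliqueP => _ _ /imsetP [i _ ->] /imsetP [j _ ->] ij.
  rewrite ffunE /= !vtx_mod; apply: contra ij => /eqP /val_inj ->; by [].
rewrite card_imset ?card_ord // => i j /(congr1 (fun v : 'I_(p*t) => (v %% p)%N)).
by rewrite !vtx_mod => /val_inj.
Qed.

Lemma phiF_inj : injective phiF.
Proof.
move=> h1 h2 e; apply/ffunP => i.
have : vtx i (h1 i) \in phiF h2 by rewrite -e; apply: imset_f.
case/imsetP => j _ /[dup] /(congr1 (fun v : 'I_(p*t) => (v %% p)%N)).
rewrite !vtx_mod => /val_inj ij; subst j.
by move/(congr1 (fun v : 'I_(p*t) => (v %/ p)%N)); rewrite !vtx_div => /val_inj.
Qed.

Lemma faces_ge : (t ^ p <= #|faces Gt p|)%N.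
Proof.
have -> : (t ^ p = #|phiF @: [set: {ffun 'I_p -> 'I_t}]|)%N by rewrite card_imset ?cardsT ?card_ffun ?card_ord //; exact: phiF_inj.
apply: subset_leq_card; apply/subsetP => _ /imsetP [h _ ->]; exact: phiF_face.
Qed.

End Gt.

Lemma Gt_betti (K : fieldType) p t : (0 < t)%N ->
  (t ^ p.+1 - (p.+1 * t) ^ p <= total_betti K (Gt p.+1 t))%N.
Proof.
move=> t0.
set G := Gt p.+1 t.
have bz : bdmx K G p.+2 = 0%R.
  apply/matrixP => i j; rewrite !mxE /bd_entry.
  case: ifP => // /and3P [Hf _ _]; exfalso.
  move: Hf; rewrite facesE => /andP [cA /eqP cA'].
  by move: (Gt_clique_le (isT : (0 < p.+1)%N) cA); rewrite cA' ltnn.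
have rp : (\rank (bdmx K G p.+1) <= #|faces G p|)%N.
  apply: rank_upper => i j jF; rewrite !mxE /bd_entry /=.
  by rewrite (negbTE jF) andbF.
have fp : (#|faces G p| <= (p.+1 * t) ^ p)%N.
  exact: leq_trans (faces_le G p) (bin_le _ _).
have ge := faces_ge t (isT : (0 < p.+1)%N).
apply: (@leq_trans (reduced_betti K G p.+1)).
  rewrite /reduced_betti bz mxrank0 subn0.
  apply: leq_trans (leq_sub2l _ (leq_trans rp fp)); exact: leq_sub2r.
rewrite /total_betti.
have pk : (p.+1 < (p.+1 * t).+2)%N.
  have : (p.+1 <= p.+1 * t)%N by rewrite leq_pmulr. lia.
rewrite (bigD1 (Ordinal pk)) //=; exact: leq_addr.
Qed.

Definition g0 : graph 0 := [ffun _ => false].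

Lemma g0_betti (K : fieldType) : (1 <= total_betti K g0)%N.
Proof.
rewrite /total_betti big_ord_recl /= /reduced_betti.
have b0 : bdmx K g0 0 = 0%R by apply/matrixP => i j; rewrite !mxE.
have b1 : bdmx K g0 1 = 0%R.
  apply/matrixP => i j; rewrite !mxE /bd_entry; case: ifP => // /and3P [Hf _ _].
  move: Hf; rewrite facesE => /andP [_ /eqP e].
  by have := max_card (mem (enum_val i)); rewrite e card_ord.
rewrite b0 b1 !mxrank0 !subn0; apply: leq_trans (leq_addr _ _).
rewrite card_gt0; apply/set0Pn; exists set0; rewrite facesE cards0 eqxx andbT.
by apply/cliqueP => x; rewrite inE.
Qed.

Theorem theorem1p5 (K : fieldType) (i1 m : nat) :
  (1 <= i1 <= 2)%N -> (1 <= m)%N ->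
  exists (c N : nat), (0 < c)%N /\
    forall n : nat, (N <= n)%N ->
      (n ^ (m - 1) <= c * bH K (Kmulti i1 m) n)%N /\
      (bH K (Kmulti i1 m) n <= c * n ^ (m - 1))%N.
Proof.
move=> hi m1.
have up n : (1 <= n)%N -> (bH K (Kmulti i1 m) n <= m * n ^ (m - 1))%N.
  move=> n1; apply/bigmax_leqP => [[k kn]] _; apply/bigmax_leqP => G /andP [sg Hf].
  exact: tb_upper sg hi Hf m1 _ n1.
have lowb k (G : graph k) n : (k <= n)%N -> simple_graph G ->
    ~~ has_induced (Kmulti i1 m) G -> (total_betti K G <= bH K (Kmulti i1 m) n)%N.
  move=> kn sg Hf; rewrite /bH.
  apply: leq_trans _ (leq_bigmax (Ordinal (kn : (k < n.+1)%N))).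
  by apply: (@leq_bigmax_cond _ _ (fun G : graph k => total_betti K G) G); rewrite sg Hf.
case: m m1 up lowb => [//|[|p]] _ up lowb.
- exists 1%N, 1%N; split => // n n1; split; last by rewrite mul1n; exact: up.
  rewrite mul1n expn0; apply: leq_trans (g0_betti K) (lowb _ g0 n _ _ _) => //.
    by apply/andP; split; apply/forallP => x; case: x => -[].
  apply/negP => /existsP [f _].
  have h0 : (0 < i1 + 0)%N by rewrite addn0; case/andP: hi.
  by case: (f (Ordinal h0)) => -[].
- set P := p.+1.
  have P0 : (0 < P)%N by [].
  exists (2 * (2 * P) ^ P * p.+2)%N, (P * (2 * P ^ p))%N; split.
    by rewrite !muln_gt0 expn_gt0.
  move=> n nN.
  have e1 : (p.+2 - 1 = P)%N by rewrite subn1.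
  rewrite e1.
  have n1 : (1 <= n)%N.
    apply: leq_trans nN; by rewrite !muln_gt0 expn_gt0.
  split; last first.
    apply: leq_trans (up n n1) _; rewrite e1 leq_mul2r; apply/orP; right.
    by rewrite mulnC leq_pmulr // muln_gt0 expn_gt0.
  set t := (n %/ P)%N.
  have tT : (2 * P ^ p <= t)%N.
    by have := leq_div2r P nN; rewrite mulKn.
  have t1 : (0 < t)%N by apply: leq_trans tT; rewrite muln_gt0 expn_gt0.
  have b := Gt_betti K p t1.
  have kn : (P * t <= n)%N by rewrite mulnC leq_divM.
  have bb := lowb _ (Gt P t) n kn (Gt_simple _ _) (Gt_free t P0 hi erefl).
  have eY : ((P * t) ^ p = P ^ p * t ^ p)%N by rewrite expnMn.
  have hY : (2 * (P * t) ^ p <= t ^ P)%N.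
    by rewrite eY mulnA expnS leq_mul2r tT orbT.
  have hX : (t ^ P <= 2 * bH K (Kmulti i1 p.+2) n)%N.
    move: b bb hY; set X := (t ^ P)%N; set Y := ((P * t) ^ p)%N.
    set Z := total_betti _ _; set W := bH _ _ _; lia.
  have hn : (n <= 2 * P * t)%N.
    have := ltn_ceil n P0; rewrite -/t => h.
    apply: leq_trans (ltnW h) _; rewrite mulnC [2 * P]mulnC -mulnA leq_mul2l; apply/orP; right; lia.
  apply: (@leq_trans ((2 * P) ^ P * t ^ P)).
    by rewrite -expnMn; apply: expn_mono.
  apply: (@leq_trans ((2 * P) ^ P * (2 * bH K (Kmulti i1 p.+2) n))).
    by rewrite leq_mul2l hX orbT.
  set W := bH _ _ _; set Q := ((2 * P) ^ P)%N.
  have -> : (2 * Q * p.+2 * W = (Q * (2 * W)) * p.+2)%N by lia.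
  by rewrite leq_pmulr.
Qed.
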